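(* Let $n,k,N$ be positive integers, let $\Omega=(\omega_1,\dots,\omega_k)'$ be a probability vector and let $M=(\mu_{i,j})\in\mathbb{R}^{n\times k}$ be a matrix whose columns are probability vectors on $\{1,\dots,n\}$. Let $c_1,\dots,c_N$ be positive integers (document lengths) such that $\sum_{i=1}^N c_i>0$, $\sum_{i=1}^N c_i(c_i-1)>0$ and $\sum_{i=1}^N c_i(c_i-1)(c_i-2)>0$. Let $X^{(1)},\dots,X^{(N)}$ be $N$ documents generated independently according to the single topic model with parameters $(M,\Omega)$, document $i$ having $c_i$ words. Define: \begin{itemize} \item $\tilde M_1\in\mathbb{R}^n$ by $(\tilde M_1)_h=\dfrac{\sum_{i=1}^N (X^{(i)})_h}{\sum_{i=1}^N c_i}$; \item the symmetric matrix $\tilde M_2\in\mathbb{R}^{n\times n}$ by, for $h\neq l$, $(\tilde M_2)_{h,l}=\dfrac{\sum_{i=1}^N (X^{(i)})_h (X^{(i)})_l}{\sum_{i=1}^N (c_i-1)c_i}$ and $(\tilde M_2)_{h,h}=\dfrac{\sum_{i=1}^N (X^{(i)})_h((X^{(i)})_h-1)}{\sum_{i=1}^N (c_i-1)c_i}$; \item the symmetric tensor $\tilde M_3\in\mathbb{R}^{n\times n\times n}$ (invariant under permutation of its three indices) by, for pairwise distinct $h,l,m$, $(\tilde M_3)_{h,l,m}=\dfrac{\sum_{i=1}^N (X^{(i)})_h (X^{(i)})_l (X^{(i)})_m}{\sum_{i=1}^N (c_i-2)(c_i-1)c_i}$, for $h\neq l$, $(\tilde M_3)_{h,l,l}=\dfrac{\sum_{i=1}^N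 (X^{(i)})_h (X^{(i)})_l ((X^{(i)})_l-1)}{\sum_{i=1}^N (c_i-2)(c_i-1)c_i}$, and $(\tilde M_3)_{l,l,l}=\dfrac{\sum_{i=1}^N (X^{(i)})_l ((X^{(i)})_l-1)((X^{(i)})_l-2)}{\sum_{i=1}^N (c_i-2)(c_i-1)c_i}$. \end{itemize} Then for all $h,l,m\in\{1,\dots,n\}$: $\mathbb{E}[(\tilde M_1)_h]=\sum_{j=1}^k \omega_j\mu_{h,j}$, $\mathbb{E}[(\tilde M_2)_{h,l}]=\sum_{j=1}^k\omega_j\mu_{h,j}\mu_{l,j}$, and $\mathbb{E}[(\tilde M_3)_{h,l,m}]=\sum_{j=1}^k\omega_j\mu_{h,j}\mu_{l,j}\mu_{m,j}$.
   Context: Single topic model: for each document independently, a hidden topic $Y\in\{1,\dots,k\}$ is drawn with $\mathbb{P}(Y=j)=\omega_j$; given $Y=j$, each of the $c_i$ words of the document is drawn independently, word $h\in\{1,\dots,n\}$ having probability $\mu_{h,j}$. A word is encoded as the standard basis vector $e_h\in\mathbb{R}^n$, and $X^{(i)}\in\mathbb{R}^n$ is the sum of the encodings of the words of document $i$, i.e. $(X^{(i)})_h$ is the number of occurrences of word $h$ in document $i$. The lengths $c_i$ are fixed (non-random). *)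

(* Defs.v *)
From mathcomp Require Import all_boot all_order all_algebra.
Set Implicit Arguments. Unset Strict Implicit. Unset Printing Implicit Defensive.
Import Order.TTheory GRing.Theory Num.Theory.
Local Open Scope ring_scope.

Section SingleTopic.
Variables (R : realFieldType) (n k N : nat) (c : 'I_N -> nat).

(* word slots: pairs (i, t) with document i and position t < c i *)
Definition slot := {i : 'I_N & 'I_(c i)}.

(* an outcome: the topic of each document and the word in each slot *)
Definition outcome := ({ffun 'I_N -> 'I_k} * {ffun slot -> 'I_n})%type.

Definition prob (M : 'M[R]_(n, k)) (Om : 'cV[R]_k) (s : outcome) : R :=
  (\prod_(i < N) Om (s.1 i) 0) *
  \prod_(p : slot) M (s.2 p) (s.1 (tag p)).

Definition expect (M : 'M[R]_(n, k)) (Om : 'cV[R]_k) (F : outcome -> R) : R :=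
  \sum_(s : outcome) prob M Om s * F s.

Definition X (s : outcome) (i : 'I_N) (h : 'I_n) : R :=
  (#|[set t : 'I_(c i) | s.2 (Tagged (fun j => 'I_(c j)) t) == h]|)%:R.

Definition den1 : R := (\sum_(i < N) c i)%:R.
Definition den2 : R := \sum_(i < N) ((c i)%:R - 1) * (c i)%:R.
Definition den3 : R :=
  \sum_(i < N) ((c i)%:R - 2) * ((c i)%:R - 1) * (c i)%:R.

Definition M1t (s : outcome) (h : 'I_n) : R :=
  (\sum_(i < N) X s i h) / den1.

Definition M2t (s : outcome) (h l : 'I_n) : R :=
  if h == l then (\sum_(i < N) X s i h * (X s i h - 1)) / den2
  else (\sum_(i < N) X s i h * X s i l) / den2.

(* entry with indices (h, l, l), h <> l *)
Definition M3pair (s : outcome) (h l : 'I_n) : R :=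
  (\sum_(i < N) X s i h * X s i l * (X s i l - 1)) / den3.

Definition M3t (s : outcome) (h l m : 'I_n) : R :=
  if (h == l) && (l == m) then
    (\sum_(i < N) X s i l * (X s i l - 1) * (X s i l - 2)) / den3
  else if h == l then M3pair s m h
  else if l == m then M3pair s h l
  else if h == m then M3pair s l h
  else (\sum_(i < N) X s i h * X s i l * X s i m) / den3.

End SingleTopic.

Arguments prob {R n k N c} M Om s.
Arguments expect {R n k N c} M Om F.
Arguments X {R n k N c} s i h.
Arguments M1t {R n k N c} s h.
Arguments M2t {R n k N c} s h l.
Arguments M3pair {R n k N c} s h l.
Arguments M3t {R n k N c} s h l m.
Arguments den1 {R N} c.
Arguments den2 {R N} c.
Arguments den3 {R N} c.

(* Main.v *)
Require Import Defs.
From mathcomp Require Import all_boot all_order all_algebra.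
From mathcomp Require Import ring.
Import Order.TTheory GRing.Theory Num.Theory.
Local Open Scope ring_scope.

Section S.
Variables (R : realFieldType) (n k N : nat) (c : 'I_N -> nat) (M : 'M[R]_(n,k)) (Om : 'cV[R]_k).
Hypothesis HOm : \sum_(j < k) Om j 0 = 1.
Hypothesis HM : forall j, \sum_(h < n) M h j = 1.

Lemma E_prodF (F : slot c -> 'I_n -> R) :
 expect M Om (fun s : outcome n k c => \prod_p F p (s.2 p)) =
 \sum_(z : {ffun 'I_N -> 'I_k}) (\prod_i Om (z i) 0) *
    \prod_p (\sum_y M y (z (tag p)) * F p y).
Proof.
rewrite /expect /prob.
rewrite -(pair_bigA _ (fun (z : {ffun 'I_N -> 'I_k}) (w : {ffun slot c -> 'I_n}) =>
   (\prod_i Om (z i) 0 * \prod_p M (w p) (z (tag p))) * \prod_p F p (w p))) /=.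
apply: eq_bigr => z _.
rewrite (bigA_distr_bigA (fun p y => M y (z (tag p)) * F p y)) mulr_sumr.
apply: eq_bigr => w _.
by rewrite big_split /= mulrA.
Qed.

Lemma tagged_neq (i : 'I_N) (t t' : 'I_(c i)) :
  (Tagged (fun j => 'I_(c j)) t == Tagged (fun j => 'I_(c j)) t') = (t == t').
Proof. by rewrite eq_Tagged. Qed.


Lemma eq_expect (F G : outcome n k c -> R) : F =1 G -> expect M Om F = expect M Om G.
Proof. by move=> e; apply: eq_bigr => s _; rewrite e. Qed.

Definition Fw (L : seq (slot c * 'I_n)) (p : slot c) (y : 'I_n) : R :=
  \prod_(q <- L) (if p == q.1 then (y == q.2)%:R else 1).

Lemma Fw_sum (L : seq (slot c * 'I_n)) p j : uniq (map fst L) ->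
  \sum_y M y j * Fw L p y = \prod_(q <- L) (if p == q.1 then M q.2 j else 1).
Proof.
rewrite /Fw; elim: L => [|q L IH] /=.
  by rewrite big_nil; under eq_bigr do rewrite big_nil mulr1; rewrite HM.
case/andP=> qL uL; rewrite big_cons.
have [epq|npq] := eqVneq p q.1.
  have h1 : forall y, \prod_(q0 <- L) (if p == q0.1 then (y == q0.2)%:R else 1) = 1 :> R.
    move=> y; rewrite big1_seq // => q0 /andP[_ q0L].
    case: eqP => // e; case/negP: qL; rewrite -epq e; exact: map_f.
  have h2 : \prod_(q0 <- L) (if p == q0.1 then M q0.2 j else 1) = 1.
    rewrite big1_seq // => q0 /andP[_ q0L].
    case: eqP => // e; case/negP: qL; rewrite -epq e; exact: map_f.
  have ep : (p == q.1) = true by apply/eqP.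
  under eq_bigr do rewrite big_cons ep h1 mulr1.
  rewrite h2 mulr1 (bigD1 q.2) //= eqxx mulr1 big1 ?addr0 // => y /negPf ->.
  by rewrite mulr0.
under eq_bigr do rewrite big_cons (negPf npq) mul1r.
by rewrite IH // mul1r.
Qed.

Lemma E_word (i0 : 'I_N) (L : seq (slot c * 'I_n)) :
  uniq (map fst L) -> all (fun q => tag q.1 == i0) L ->
  expect M Om (fun s : outcome n k c => \prod_(q <- L) (s.2 q.1 == q.2)%:R) =
  \sum_j Om j 0 * \prod_(q <- L) M q.2 j.
Proof.
move=> uL aL.
rewrite (@eq_expect _ (fun s : outcome n k c => \prod_p Fw L p (s.2 p))); last first.
  move=> s; rewrite /Fw exchange_big /=; apply: eq_bigr => q _.
  by rewrite -big_mkcond big_pred1_eq.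
rewrite E_prodF.
set G := fun j : 'I_k => \prod_(q <- L) M q.2 j.
have e1 : forall z : {ffun 'I_N -> 'I_k},
   \prod_p (\sum_y M y (z (tag p)) * Fw L p y) = G (z i0).
  move=> z; under eq_bigr do rewrite Fw_sum //.
  rewrite exchange_big /=; apply: eq_big_seq => q qL.
  rewrite -big_mkcond big_pred1_eq.
  by have /allP/(_ q qL)/eqP -> := aL.
under eq_bigr do rewrite e1.
have e2 : forall z : {ffun 'I_N -> 'I_k}, (\prod_i Om (z i) 0) * G (z i0) =
   \prod_i (Om (z i) 0 * (if i == i0 then G (z i) else 1)).
  move=> z; rewrite big_split /=; congr (_ * _).
  by rewrite -big_mkcond big_pred1_eq.
under eq_bigr do rewrite e2.
rewrite -(bigA_distr_bigA (fun i y => Om y 0 * (if i == i0 then G y else 1))) /=.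
rewrite (bigD1 i0) //= [X in _ * X]big1 ?mulr1.
  by apply: eq_bigr => j _; rewrite eqxx.
by move=> i /negPf ->; under eq_bigr do rewrite mulr1; rewrite HOm.
Qed.


Lemma E_sum (I : Type) (r : seq I) (P : pred I) (F : I -> outcome n k c -> R) :
  expect M Om (fun s => \sum_(i <- r | P i) F i s) = \sum_(i <- r | P i) expect M Om (F i).
Proof. by rewrite /expect; under eq_bigr do rewrite mulr_sumr; exact: exchange_big. Qed.

Lemma E_scale (F : outcome n k c -> R) d :
  expect M Om (fun s => F s / d) = expect M Om F / d.
Proof. by rewrite /expect mulr_suml; apply: eq_bigr => s _; rewrite mulrA. Qed.

Definition a (s : outcome n k c) (i : 'I_N) (h : 'I_n) (t : 'I_(c i)) : R :=
  (s.2 (Tagged (fun j => 'I_(c j)) t) == h)%:R.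

Definition S2 s i h l := \sum_(t < c i) \sum_(t' < c i | t' != t) a s i h t * a s i l t'.
Definition S3 s i h l m := \sum_(t < c i) \sum_(t' < c i | t' != t)
   \sum_(t'' < c i | (t'' != t) && (t'' != t')) a s i h t * a s i l t' * a s i m t''.

Lemma X_sum s i h : X s i h = \sum_(t < c i) a s i h t.
Proof.
rewrite /X -sum1_card natr_sum big_mkcond; apply: eq_bigr => t _.
by rewrite inE /a; case: ifP.
Qed.

Lemma ind2 (y h l : 'I_n) : (y == h)%:R * (y == l)%:R = (h == l)%:R * (y == h)%:R :> R.
Proof.
case: (eqVneq y h) => [<-|_]; first by rewrite ?eqxx mul1r mulr1.
by rewrite mul0r mulr0.
Qed.

Lemma L2 s i h l : X s i h * X s i l = (h == l)%:R * X s i h + S2 s i h l.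
Proof.
rewrite !X_sum mulr_suml mulr_sumr /S2 -big_split; apply: eq_bigr => t _ /=.
rewrite mulr_sumr (bigD1 t) //=; congr (_ + _).
by rewrite /a ind2.
Qed.

Lemma L3 s i h l m : S2 s i h l * X s i m =
  S3 s i h l m + ((h == m)%:R + (l == m)%:R) * S2 s i h l.
Proof.
rewrite /S2 /S3 mulr_suml mulr_sumr -big_split; apply: eq_bigr => t _ /=.
rewrite mulr_suml mulr_sumr -big_split; apply: eq_bigr => t' tt' /=.
rewrite X_sum (bigD1 t) //= (bigD1 t') /=; last by rewrite tt'.
rewrite -mulr_sumr.
set A := a s i h t; set B := a s i l t'; set C := a s i m t; set D := a s i m t'.
set Sg := \sum_(_ < _ | _) _.
have e1 : A * C = (h == m)%:R * A by rewrite /A /C /a ind2.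
have e2 : B * D = (l == m)%:R * B by rewrite /B /D /a ind2.
transitivity (A * C * B + B * D * A + A * B * Sg); first by ring.
rewrite e1 e2; ring.
Qed.


Lemma P_eq3 s i l : X s i l * (X s i l - 1) * (X s i l - 2) = S3 s i l l l.
Proof.
have e2 := L2 s i l l; have e3 := L3 s i l l l; rewrite eqxx /= in e2 e3.
have -> : S3 s i l l l = S2 s i l l * X s i l - (1 + 1) * S2 s i l l.
  by rewrite e3; ring.
have -> : S2 s i l l = X s i l * X s i l - X s i l by rewrite e2; ring.
ring.
Qed.

Lemma P_pair s i h l : h != l -> X s i h * X s i l * (X s i l - 1) = S3 s i h l l.
Proof.
move=> hl; have e2 := L2 s i h l; have e3 := L3 s i h l l.
rewrite (negPf hl) eqxx /= in e2 e3.
have -> : S3 s i h l l = S2 s i h l * X s i l - S2 s i h l by rewrite e3; ring.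
rewrite -[S2 _ _ _ _](_ : X s i h * X s i l = _) ?e2; ring.
Qed.

Lemma P_dist s i h l m : h != l -> l != m -> h != m ->
  X s i h * X s i l * X s i m = S3 s i h l m.
Proof.
move=> hl lm hm; have e2 := L2 s i h l; have e3 := L3 s i h l m.
rewrite (negPf hl) (negPf lm) (negPf hm) /= in e2 e3.
have -> : X s i h * X s i l = S2 s i h l by rewrite e2; ring.
rewrite e3; ring.
Qed.

Lemma P_eq2 s i h : X s i h * (X s i h - 1) = S2 s i h h.
Proof. have e2 := L2 s i h h; rewrite eqxx /= in e2; rewrite mulrBr e2; ring. Qed.

Lemma P_dist2 s i h l : h != l -> X s i h * X s i l = S2 s i h l.
Proof. move=> hl; have e2 := L2 s i h l; rewrite (negPf hl) /= in e2; rewrite e2; ring. Qed.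


Definition pt {i : 'I_N} (t : 'I_(c i)) : slot c := Tagged (fun j => 'I_(c j)) t.

Definition Q1 h := \sum_(j < k) Om j 0 * M h j.
Definition Q2 h l := \sum_(j < k) Om j 0 * M h j * M l j.
Definition Q3 h l m := \sum_(j < k) Om j 0 * M h j * M l j * M m j.

Lemma E_a1 i h (t : 'I_(c i)) : expect M Om (fun s => a s i h t) = Q1 h.
Proof.
rewrite (@eq_expect _ (fun s : outcome n k c =>
   \prod_(q <- [:: (pt t, h)]) (s.2 q.1 == q.2)%:R)); last first.
  by move=> s; rewrite !big_cons big_nil mulr1.
rewrite (E_word i) //=; last by rewrite eqxx.
by apply: eq_bigr => j _; rewrite !big_cons big_nil mulr1.
Qed.

Lemma E_a2 i h l (t t' : 'I_(c i)) : t' != t ->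
  expect M Om (fun s => a s i h t * a s i l t') = Q2 h l.
Proof.
move=> tt'.
rewrite (@eq_expect _ (fun s : outcome n k c =>
   \prod_(q <- [:: (pt t, h); (pt t', l)]) (s.2 q.1 == q.2)%:R)); last first.
  by move=> s; rewrite !big_cons big_nil mulr1.
rewrite (E_word i) //=; last by rewrite !eqxx.
  by apply: eq_bigr => j _; rewrite !big_cons big_nil mulr1 mulrA.
by rewrite inE /pt tagged_neq eq_sym tt'.
Qed.

Lemma E_a3 i h l m (t t' t'' : 'I_(c i)) : t' != t -> t'' != t -> t'' != t' ->
  expect M Om (fun s => a s i h t * a s i l t' * a s i m t'') = Q3 h l m.
Proof.
move=> tt' tt'' t't''.
rewrite (@eq_expect _ (fun s : outcome n k c =>
   \prod_(q <- [:: (pt t, h); (pt t', l); (pt t'', m)]) (s.2 q.1 == q.2)%:R)); last first.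
  by move=> s; rewrite !big_cons big_nil mulr1 !mulrA.
rewrite (E_word i) //=; last by rewrite !eqxx.
  by apply: eq_bigr => j _; rewrite !big_cons big_nil mulr1 !mulrA.
by rewrite !inE /pt !tagged_neq !negb_or (eq_sym t t') (eq_sym t t'') (eq_sym t' t'') tt' tt'' t't''.
Qed.

Lemma cnt1x (m : nat) (t : 'I_m) (x : R) : \sum_(u < m | u != t) x = x * (m%:R - 1).
Proof.
have e : \sum_(u < m) x = x * m%:R by rewrite sumr_const card_ord mulr_natr.
rewrite (bigD1 t) //= in e.
by rewrite mulrBr mulr1 -e; ring.
Qed.

Lemma cnt2x (m : nat) (t t' : 'I_m) (x : R) : t' != t ->
  \sum_(u < m | (u != t) && (u != t')) x = x * (m%:R - 2).
Proof.
move=> tt'; have e := cnt1x m t x; rewrite (bigD1 t') //= in e.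
by apply: (addrI x); rewrite e; ring.
Qed.

Lemma ES1 h : expect M Om (fun s : outcome n k c => \sum_(i < N) X s i h) = Q1 h * den1 c.
Proof.
rewrite E_sum /den1 natr_sum mulr_sumr; apply: eq_bigr => i _.
rewrite (@eq_expect _ (fun s : outcome n k c => \sum_(t < c i) a s i h t)); last by move=> s; rewrite X_sum.
rewrite E_sum; under eq_bigr do rewrite E_a1.
by rewrite sumr_const card_ord mulr_natr.
Qed.

Lemma ES2 h l : expect M Om (fun s : outcome n k c => \sum_(i < N) S2 s i h l) = Q2 h l * den2 c.
Proof.
rewrite E_sum /den2 mulr_sumr; apply: eq_bigr => i _.
rewrite /S2 E_sum.
transitivity (\sum_(t < c i) \sum_(t' < c i | t' != t) Q2 h l).
  apply: eq_bigr => t _; rewrite E_sum; apply: eq_bigr => t' tt'; exact: E_a2.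
under eq_bigr do rewrite cnt1x.
by rewrite sumr_const card_ord -mulr_natr; ring.
Qed.

Lemma ES3 h l m : expect M Om (fun s : outcome n k c => \sum_(i < N) S3 s i h l m) = Q3 h l m * den3 c.
Proof.
rewrite E_sum /den3 mulr_sumr; apply: eq_bigr => i _.
rewrite /S3 E_sum.
transitivity (\sum_(t < c i) \sum_(t' < c i | t' != t)
   \sum_(t'' < c i | (t'' != t) && (t'' != t')) Q3 h l m).
  apply: eq_bigr => t _; rewrite E_sum; apply: eq_bigr => t' tt'; rewrite E_sum.
  apply: eq_bigr => t'' /andP[h1 h2]; exact: E_a3.
transitivity (\sum_(t < c i) \sum_(t' < c i | t' != t) Q3 h l m * ((c i)%:R - 2)).
  apply: eq_bigr => t _; apply: eq_bigr => t' tt'; exact: cnt2x.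
under eq_bigr do rewrite cnt1x.
by rewrite sumr_const card_ord -mulr_natr; ring.
Qed.


Lemma fin3 (F : outcome n k c -> R) (Nm : outcome n k c -> 'I_N -> R) h l m :
  den3 (R:=R) c != 0 -> (forall s i, Nm s i = S3 s i h l m) ->
  (forall s, F s = (\sum_(i < N) Nm s i) / den3 c) ->
  expect M Om F = Q3 h l m.
Proof.
move=> d3 eN eF; rewrite (eq_expect _ _ eF) E_scale.
rewrite (@eq_expect _ (fun s : outcome n k c => \sum_(i < N) S3 s i h l m)); last first.
  by move=> s; apply: eq_bigr => i _; exact: eN.
by rewrite ES3 mulfK.
Qed.

Lemma fin2 (F : outcome n k c -> R) (Nm : outcome n k c -> 'I_N -> R) h l :
  den2 (R:=R) c != 0 -> (forall s i, Nm s i = S2 s i h l) ->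
  (forall s, F s = (\sum_(i < N) Nm s i) / den2 c) ->
  expect M Om F = Q2 h l.
Proof.
move=> d2 eN eF; rewrite (eq_expect _ _ eF) E_scale.
rewrite (@eq_expect _ (fun s : outcome n k c => \sum_(i < N) S2 s i h l)); last first.
  by move=> s; apply: eq_bigr => i _; exact: eN.
by rewrite ES2 mulfK.
Qed.

Lemma main_sec : den1 (R:=R) c != 0 -> den2 (R:=R) c != 0 -> den3 (R:=R) c != 0 ->
  forall h l m : 'I_n,
    expect M Om (fun s : outcome n k c => M1t s h) = \sum_(j < k) Om j 0 * M h j /\
    expect M Om (fun s : outcome n k c => M2t s h l) = \sum_(j < k) Om j 0 * M h j * M l j /\
    expect M Om (fun s : outcome n k c => M3t s h l m) =
      \sum_(j < k) Om j 0 * M h j * M l j * M m j.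
Proof.
move=> d1 d2 d3 h l m; split; [|split].
- by rewrite /M1t E_scale ES1 mulfK.
- have [<-|hl] := eqVneq h l.
    apply: (@fin2 _ (fun s i => X s i h * (X s i h - 1))) => // s.
      by move=> i; exact: P_eq2.
    by rewrite /M2t eqxx.
  apply: (@fin2 _ (fun s i => X s i h * X s i l)) => // s.
    by move=> i; exact: P_dist2.
  by rewrite /M2t (negPf hl).
- have [<-|hl] := eqVneq h l.
    have [<-|hm] := eqVneq h m.
      apply: (@fin3 _ (fun s i => X s i h * (X s i h - 1) * (X s i h - 2))) => // s.
        by move=> i; exact: P_eq3.
      by rewrite /M3t eqxx.
    transitivity (Q3 m h h); last by apply: eq_bigr => j _; ring.
    apply: (@fin3 _ (fun s i => X s i m * X s i h * (X s i h - 1))) => // s.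
      by move=> i; apply: P_pair; rewrite eq_sym.
    by rewrite /M3t eqxx (negPf hm).
  have [<-|lm] := eqVneq l m.
    apply: (@fin3 _ (fun s i => X s i h * X s i l * (X s i l - 1))) => // s.
      by move=> i; exact: P_pair.
    by rewrite /M3t eqxx (negPf hl).
  have [ehm|hm] := eqVneq h m.
    subst m; transitivity (Q3 l h h); last by apply: eq_bigr => j _; ring.
    apply: (@fin3 _ (fun s i => X s i l * X s i h * (X s i h - 1))) => // s.
      by move=> i; apply: P_pair; rewrite eq_sym.
    by rewrite /M3t eqxx (negPf hl) (negPf lm).
  apply: (@fin3 _ (fun s i => X s i h * X s i l * X s i m)) => // s.
    by move=> i; exact: P_dist.
  by rewrite /M3t (negPf hl) (negPf lm) (negPf hm).
Qed.

End S.

Theorem theorem2p1 (R : realFieldType) (n k N : nat) (c : 'I_N -> nat)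
  (M : 'M[R]_(n, k)) (Om : 'cV[R]_k) :
  (0 < n)%N -> (0 < k)%N -> (0 < N)%N ->
  (forall j, 0 <= Om j 0) -> \sum_(j < k) Om j 0 = 1 ->
  (forall h j, 0 <= M h j) -> (forall j, \sum_(h < n) M h j = 1) ->
  (forall i, 0 < c i)%N ->
  (0 < \sum_(i < N) c i)%N ->
  (0 < \sum_(i < N) c i * (c i - 1))%N ->
  (0 < \sum_(i < N) c i * (c i - 1) * (c i - 2))%N ->
  forall h l m : 'I_n,
    expect M Om (fun s : outcome n k c => M1t s h) = \sum_(j < k) Om j 0 * M h j /\
    expect M Om (fun s : outcome n k c => M2t s h l) = \sum_(j < k) Om j 0 * M h j * M l j /\
    expect M Om (fun s : outcome n k c => M3t s h l m) =
      \sum_(j < k) Om j 0 * M h j * M l j * M m j.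
Proof.
move=> _ _ _ _ HOm _ HM hc p1 p2 p3.
apply: main_sec => //.
- by rewrite /den1 pnatr_eq0 -lt0n.
- have -> : den2 (R:=R) c = (\sum_(i < N) c i * (c i - 1))%:R.
    rewrite /den2 natr_sum; apply: eq_bigr => i _.
    by rewrite natrM natrB ?hc // mulrC.
  by rewrite pnatr_eq0 -lt0n.
- have -> : den3 (R:=R) c = (\sum_(i < N) c i * (c i - 1) * (c i - 2))%:R.
    rewrite /den3 natr_sum; apply: eq_bigr => i _.
    move: (hc i); case: (c i) => [|[|q]] // _.
      by rewrite subrr mulr0 mul0r.
    by rewrite !natrM !natrB //; ring.
  by rewrite pnatr_eq0 -lt0n.
Qed.
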